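(* The clique number of the orthomorphism graph of $\mathbb{Z}_2\times\mathbb{Z}_4$ is $2$; that is, $\omega(\mathbb{Z}_2\times\mathbb{Z}_4)=2$.
   Context: A normalised orthomorphism of a finite group $G$ is a bijection $\theta\colon G\to G$ with $\theta(e)=e$ such that $x\mapsto x^{-1}\theta(x)$ is a bijection of $G$. Two orthomorphisms $\theta_1,\theta_2$ are orthogonal if $x\mapsto\theta_1(x)^{-1}\theta_2(x)$ is a bijection of $G$. The orthomorphism graph $\mathrm{Orth}(G)$ has the normalised orthomorphisms of $G$ as vertices, two being adjacent iff they are orthogonal; $\omega(G)$ is the largest size of a complete subgraph of $\mathrm{Orth}(G)$. *)

(* Defs.v *)
From HB Require Import structures.
From mathcomp Require Import all_boot all_order all_algebra all_fingroup all_solvable.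
Set Implicit Arguments. Unset Strict Implicit. Unset Printing Implicit Defensive.

Local Open Scope group_scope.

Section Orth.
Variable gT : finGroupType.

(* normalised orthomorphism: a bijection theta with theta 1 = 1 such that
   x |-> x^-1 * theta x is a bijection (on a finite type, injective = bijective) *)
Definition normalised_orthomorphism (theta : {ffun gT -> gT}) : bool :=
  [&& theta 1 == 1, injectiveb theta & injectiveb (fun x : gT => (x^-1 * theta x))].

Definition orthogonal_orth (theta1 theta2 : {ffun gT -> gT}) : bool :=
  injectiveb (fun x : gT => (theta1 x)^-1 * theta2 x).

Definition orth_clique (S : {set {ffun gT -> gT}}) : bool :=
  [forall t in S, normalised_orthomorphism t] &&
  [forall t1 in S, forall t2 in S, (t1 != t2) ==> orthogonal_orth t1 t2].

Definition orth_clique_number : nat :=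
  \max_(S : {set {ffun gT -> gT}} | orth_clique S) #|S|.
End Orth.

Definition Z2xZ4 : finGroupType := ('Z_2 * 'Z_4)%type.

(* Main.v *)
Require Import Defs.
From mathcomp Require Import all_boot all_order all_algebra all_fingroup all_solvable.
From mathcomp Require Import zify.

Local Open Scope group_scope.

Notation G := Z2xZ4.
Definition decode (i : nat) : G := (inZp (i %/ 4), inZp (i %% 4)) : 'Z_2 * 'Z_4.
Definition code (x : G) : nat := (nat_of_ord x.1 * 4 + nat_of_ord x.2)%N.
Definition subN (i j : nat) : nat :=
  ((j %/ 4 + i %/ 4) %% 2 * 4 + (j %% 4 + 4 - i %% 4) %% 4)%N.

Lemma subN_ok : all (fun i => all (fun j => code ((decode i)^-1 * decode j) == subN i j)
   (iota 0 8)) (iota 0 8).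
Proof. vm_compute. reflexivity. Qed.

Definition okN (s : seq nat) : bool :=
  [&& (nth 0 s 0 == 0)%N, uniq s & uniq [seq subN i (nth 0 s i) | i <- iota 0 8]].
Definition orthN (s t : seq nat) : bool :=
  uniq [seq subN (nth 0 s i) (nth 0 t i) | i <- iota 0 8].
Definition L0 := [seq s <- permutations (iota 0 8) | okN s].
Definition L := locked L0.
Definition noTri := all (fun a =>
   all (fun b => all (fun c => ~~ ((b != c) && orthN b c)) [seq b <- L | orthN a b])
     [seq b <- L | orthN a b]) L.
Lemma noTri_ok : noTri.
Proof. rewrite /noTri /L -lock. vm_compute. reflexivity. Qed.

Lemma decodeK x : decode (code x) = x.
Proof.
case: x => [[a Ha] [b Hb]]; rewrite /decode /code /=.
congr pair; apply: val_inj => /=.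
- have Ha' : (a < 2)%N by exact: Ha.
  have Hb' : (b < 4)%N by exact: Hb.
  rewrite /Zp_trunc /=; lia.
- have Hb' : (b < 4)%N by exact: Hb.
  rewrite /Zp_trunc /=; lia.
Qed.

Lemma code_inj : injective code.
Proof. exact: can_inj decodeK. Qed.

Lemma code_lt x : (code x < 8)%N.
Proof.
case: x => [[a Ha] [b Hb]]; rewrite /code /=.
have Ha' : (a < 2)%N by exact: Ha.
have Hb' : (b < 4)%N by exact: Hb.
lia.
Qed.

Lemma codeK i : (i < 8)%N -> code (decode i) = i.
Proof.
do 8 (case: i => [|i]; first by move=> _; vm_compute).
by [].
Qed.

Lemma code_sub x y : code (x^-1 * y) = subN (code x) (code y).
Proof.
have Hx : code x \in iota 0 8 by rewrite mem_iota code_lt.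
have Hy : code y \in iota 0 8 by rewrite mem_iota code_lt.
have := allP (allP subN_ok _ Hx) _ Hy.
by rewrite !decodeK => /eqP.
Qed.

Lemma code1 : code 1 = 0%N.
Proof. by vm_compute. Qed.

Lemma uniq_map_in (T U : eqType) (g : T -> U) s :
  uniq (map g s) -> {in s &, injective g}.
Proof.
elim: s => //= a s IH /andP[Ha Hu] x y; rewrite !inE.
case/orP=> [/eqP->|Hx]; case/orP=> [/eqP->|Hy] E //.
- by move: Ha; rewrite E (map_f g Hy).
- by move: Ha; rewrite -E (map_f g Hx).
- exact: IH.
Qed.

Definition sq (f : G -> G) : seq nat := [seq code (f (decode i)) | i <- iota 0 8].

Lemma injb_sq (f : G -> G) : injectiveb f = uniq (sq f).
Proof.
apply/injectiveP/idP.
- move=> inj; rewrite map_inj_in_uniq ?iota_uniq // => i j.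
  rewrite !mem_iota /= !add0n => Hi Hj /code_inj /inj /(congr1 code).
  by rewrite !codeK.
- move=> U x y Hf.
  have Hx : code x \in iota 0 8 by rewrite mem_iota code_lt.
  have Hy : code y \in iota 0 8 by rewrite mem_iota code_lt.
  apply: code_inj; apply: (@uniq_map_in _ _ (fun i => code (f (decode i))) _ U _ _ Hx Hy) => /=.
  by rewrite !decodeK Hf.
Qed.

Lemma nth_sq (f : G -> G) i : (i < 8)%N -> nth 0%N (sq f) i = code (f (decode i)).
Proof. by move=> Hi; rewrite (nth_map 0%N) ?size_iota // nth_iota. Qed.

Lemma norm_ok (t : {ffun G -> G}) : normalised_orthomorphism t = okN (sq t).
Proof.
rewrite /normalised_orthomorphism /okN nth_sq //.
have -> : decode 0 = 1 by apply: code_inj; rewrite code1.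
have -> : (t 1 == 1) = (code (t 1) == 0%N) by rewrite -code1 (inj_eq code_inj).
rewrite injb_sq; congr [&& _, _ & _].
rewrite injb_sq /sq; congr uniq; apply/eq_in_map => i.
rewrite mem_iota /= add0n => Hi.
by rewrite code_sub codeK // -nth_sq.
Qed.

Lemma orth_ok (t1 t2 : {ffun G -> G}) : orthogonal_orth t1 t2 = orthN (sq t1) (sq t2).
Proof.
rewrite /orthogonal_orth /orthN injb_sq /sq; congr uniq; apply/eq_in_map => i.
rewrite mem_iota /= add0n => Hi.
by rewrite code_sub -!nth_sq.
Qed.

Lemma sq_inL (t : {ffun G -> G}) : normalised_orthomorphism t -> sq t \in L.
Proof.
rewrite norm_ok => H; rewrite /L -lock /L0 mem_filter H /= mem_permutations.
have /and3P[_ U _] := H.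
apply: uniq_perm => //.
have [] := uniq_min_size U (s2 := iota 0 8) _ _.
- by move=> k /mapP[i _ ->]; rewrite mem_iota code_lt.
- by rewrite size_map.
- by move=> _ E; exact: E.
Qed.

Lemma sq_inj (t1 t2 : {ffun G -> G}) : sq t1 = sq t2 -> t1 = t2.
Proof.
move=> E; apply/ffunP => x; apply: code_inj.
have := congr1 (fun s => nth 0%N s (code x)) E => /=.
by rewrite !nth_sq ?code_lt // decodeK.
Qed.

Definition mk (s : seq nat) : {ffun G -> G} := [ffun x => decode (nth 0%N s (code x))].

Lemma sq_mk s : size s = 8%N -> all (fun k => k < 8)%N s -> sq (mk s) = s.
Proof.
move=> Hsz Hall; rewrite /sq -[RHS](mkseq_nth 0%N) Hsz /mkseq; apply/eq_in_map => i.
rewrite mem_iota /= add0n => Hi.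
rewrite ffunE codeK // codeK //.
by apply: (allP Hall); apply: mem_nth; rewrite Hsz.
Qed.

Definition s1 := [:: 0; 5; 3; 4; 2; 7; 1; 6]%N.
Definition s2 := [:: 0; 4; 1; 5; 6; 2; 7; 3]%N.

Lemma sq1 : sq (mk s1) = s1. Proof. by apply: sq_mk. Qed.
Lemma sq2 : sq (mk s2) = s2. Proof. by apply: sq_mk. Qed.

Theorem corollary3 : orth_clique_number Z2xZ4 = 2.
Proof.
apply/eqP; rewrite eqn_leq; apply/andP; split.
- apply/bigmax_leqP => S /andP[/forall_inP Hn /forall_inP Ho].
  rewrite leqNgt; apply/negP => /card_gt2P [x [y [z [[Hx Hy Hz] [Hxy Hyz Hzx]]]]].
  have orth a b : a \in S -> b \in S -> a != b -> orthN (sq a) (sq b).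
    move=> Ha Hb Hab; rewrite -orth_ok.
    by have /forall_inP/(_ b Hb)/implyP := Ho a Ha; apply.
  have Lx := @sq_inL x (Hn x Hx).
  have Ly := @sq_inL y (Hn y Hy).
  have Lz := @sq_inL z (Hn z Hz).
  have Ny : sq y \in [seq b <- L | orthN (sq x) b] by rewrite mem_filter Ly andbT; apply: orth.
  have Nz : sq z \in [seq b <- L | orthN (sq x) b] by rewrite mem_filter Lz andbT; apply: orth => //; rewrite eq_sym.
  move/allP: noTri_ok => /(_ _ Lx) /allP /(_ _ Ny) /allP /(_ _ Nz).
  rewrite orth // andbT => /negP; apply.
  by apply: contra Hyz => /eqP/sq_inj ->.
- have Hne : mk s1 != mk s2.
    apply/negP => /eqP E.
    by have := congr1 (fun f : {ffun G -> G} => sq f) E; rewrite /= sq1 sq2.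
  have HS : orth_clique [set mk s1; mk s2].
    apply/andP; split.
    + apply/forall_inP => t /set2P [] ->; rewrite norm_ok ?sq1 ?sq2; by vm_compute.
    + apply/forall_inP => a /set2P [] -> ; apply/forall_inP => b /set2P [] ->;
      rewrite ?eqxx //; apply/implyP => _; rewrite orth_ok ?sq1 ?sq2; by vm_compute.
  apply: leq_trans (leq_bigmax_cond _ HS).
  by rewrite cards2 Hne.
Qed.
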